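(* Let $X_1,\dots,X_d$ be disjoint finite nonempty sets, $X$ their product, $S\subseteq[d]$ with $|S|\ge 2$, and $Z\subseteq X$ such that $\pi_{[d]-S}(Z)$ is a single point. Let $\delta>0$ with $|Z|\ge \delta\cdot|\pi_S(X)|$, and suppose $|X_i|\ge n$ for every $i\in S$. Then for every $\epsilon>0$, \[\frac{|\mathscr{G}_S(\epsilon, Z)|}{|\mathscr{G}_S(Z)|} \le \exp\left( |\pi_S(X)| \cdot \left(-\delta \epsilon^2 + 2^{|S|+2}\cdot n^{-1/2^{|S|}}\right)\right).\]
   Context: $[d]=\{1,\dots,d\}$; $\pi_T$ denotes projection of $X$ (or of $\overline{X}_S$) onto the factors indexed by $T$, so $\pi_S(X)=\prod_{i\in S}X_i$. $\overline{X}_S=\prod_{i=1}^d W_i$ with $W_i=X_i\times X_i$ for $i\in S$ and $W_i=X_i$ otherwise. For $\bar x\in\overline{X}_S$, $\widehat{x}(\emptyset)$ is the set of points $y\in X$ with $\pi_i(y)$ one of the two entries of the pair $\pi_i(\bar x)$ for $i\in S$ and $\pi_i(y)=\pi_i(\bar x)$ for $i\notin S$. For $F:Z\to\mathbb{F}_2$ define $dF$ on $\{\bar x\in\overline{X}_S:\widehat{x}(\emptyset)\subseteq Z\}$ by $dF(\bar x)=\sum_{x\in\widehat{x}(\emptyset)}F(x)$ if $|\widehat{x}(\emptyset)|=2^{|S|}$ and $dF(\bar x)=0$ otherwise. $\mathscr{G}_S(Z)$ is the set of all functions $dF$ as $F$ ranges over functions $Z\to\mathbb{F}_2$, and $\mathscr{G}_S(\epsilon,Z)$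 is the set of $g\in\mathscr{G}_S(Z)$ expressible as $g=dF$ for some $F$ equal to $1$ on more than $(0.5+\epsilon)|Z|$ or fewer than $(0.5-\epsilon)|Z|$ points of $Z$. *)

(* Defs.v *)
From HB Require Import structures.
From mathcomp Require Import all_boot all_order all_algebra.
From mathcomp Require Import reals exp sequences.
Set Implicit Arguments. Unset Strict Implicit. Unset Printing Implicit Defensive.
Import Order.TTheory GRing.Theory Num.Theory.
Local Open Scope ring_scope.

Section Defs.
(* The factors X_1, ..., X_d are the finite types T i, i : 'I_d. *)
Variables (d : nat) (T : 'I_d -> finType) (S : {set 'I_d}).

Definition prodX : finType := {dffun forall i : 'I_d, T i}.

Definition Wf (i : 'I_d) : finType :=
  if i \in S then (T i * T i)%type : finType else T i.

Definition Xbar : finType := {dffun forall i : 'I_d, Wf i}.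

Definition coord_ok (i : 'I_d) : Wf i -> T i -> bool :=
  (if i \in S as b return (if b then (T i * T i)%type : finType else T i) -> T i -> bool
   then fun p y => (y == p.1) || (y == p.2)
   else fun w y => y == w).

Definition xhat (xb : Xbar) : {set prodX} :=
  [set y : prodX | [forall i, coord_ok (xb i) (y i)]].

(* dF, for F : Z -> F_2 (only the values of F on Z matter), as a function on
   {xb | xhat xb \subset Z}; it is represented as a total function on Xbar
   that is 0 outside this domain (an injective encoding of functions on
   the domain). *)
Definition dF (Z : {set prodX}) (F : {ffun prodX -> 'F_2}) : {ffun Xbar -> 'F_2} :=
  [ffun xb => if (xhat xb \subset Z) && (#|xhat xb| == 2 ^ #|S|)%N
              then \sum_(x in xhat xb) F x else 0].

Definition GS (Z : {set prodX}) : {set {ffun Xbar -> 'F_2}} :=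
  [set dF Z F | F : {ffun prodX -> 'F_2}].

Definition GSeps (R : realType) (eps : R) (Z : {set prodX}) :
    {set {ffun Xbar -> 'F_2}} :=
  [set dF Z F | F : {ffun prodX -> 'F_2} &
     let k := (#|[set z in Z | F z == 1]|)%:R : R in
     ((1/2 + eps) * #|Z|%:R < k) || (k < (1/2 - eps) * #|Z|%:R)].

End Defs.

(* Main.v *)
Require Import Defs.
From HB Require Import structures.
From mathcomp Require Import all_boot all_order all_algebra.
From mathcomp Require Import reals exp sequences.
From mathcomp Require Import ring lra zify.
Import Order.TTheory GRing.Theory Num.Theory.
Local Open Scope ring_scope.
Set Implicit Arguments. Unset Strict Implicit. Unset Printing Implicit Defensive.

Definition upd (d : nat) (T : 'I_d -> finType) (x : prodX T) (j : 'I_d) (a : T j) : prodX T :=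
  [ffun i => match j =P i with ReflectT e => ecast k (T k) e a | ReflectF _ => x i end].

Lemma upd_eq d T (x : prodX T) (j : 'I_d) (a : T j) : upd x a j = a.
Proof. by rewrite ffunE; case: eqP => // e; rewrite eq_axiomK. Qed.

Lemma upd_neq d T (x : prodX T) (j : 'I_d) (a : T j) i : i != j -> upd x a i = x i.
Proof. by move=> ne; rewrite ffunE; case: eqP => // e; rewrite e eqxx in ne. Qed.

Lemma upd_id d T (x : prodX T) (j : 'I_d) : upd x (x j) = x.
Proof.
apply/ffunP => i; case: (eqVneq i j) => [->|ne]; first by rewrite upd_eq.
by rewrite upd_neq.
Qed.

Lemma upd_upd d T (x : prodX T) (j : 'I_d) (a b : T j) : upd (upd x a) b = upd x b.
Proof.
apply/ffunP => i; case: (eqVneq i j) => [->|ne]; first by rewrite !upd_eq.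
by rewrite !upd_neq.
Qed.

Definition cube d (T : 'I_d -> finType) (p q : prodX T) : {set prodX T} :=
  [set x : prodX T | [forall i, (x i == p i) || (x i == q i)]].

Definition fiber d (T : 'I_d -> finType) (A : {set 'I_d}) (y : prodX T) : {set prodX T} :=
  [set x : prodX T | [forall (i | i \notin A), x i == y i]].

Lemma foldr_prod (I : finType) (f : I -> nat) :
  foldr muln 1%N [seq f x | x : I] = (\prod_(x : I) f x)%N.
Proof. by rewrite /image_mem foldr_map -big_enum /= unlock /reducebig; elim: (enum I) => //= x s ->. Qed.

Lemma card_fiber d (T : 'I_d -> finType) A (y : prodX T) :
  #|fiber A y| = (\prod_(i in A) #|T i|)%N.
Proof.
pose F i : pred (T i) := if i \in A then predT else pred1 (y i).
have -> : #|fiber A y| = #|(family F : simpl_pred (prodX T))|.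
  apply: eq_card => x; rewrite inE; apply/forall_inP/familyP => H i.
    rewrite /F; case: ifP => // iA; rewrite unfold_in /=; apply: H; rewrite iA //.
  by move=> iA; have := H i; rewrite /F (negbTE iA) unfold_in.
rewrite card_family foldr_prod (bigID (mem A)) /= [X in (_ * X)%N]big1 ?muln1.
  by apply: eq_bigr => i iA; rewrite /F iA; apply: eq_card => t.
by move=> i iA; rewrite /F (negbTE iA) card1.
Qed.

Lemma card_cube d (T : 'I_d -> finType) (A : {set 'I_d}) (p q : prodX T) :
  (forall i, (p i != q i) = (i \in A)) -> #|cube p q| = (2 ^ #|A|)%N.
Proof.
move=> hd.
pose F i : pred (T i) := [pred t | (t == p i) || (t == q i)].
have -> : #|cube p q| = #|(family F : simpl_pred (prodX T))|.
  by apply: eq_card => x; rewrite inE; apply/forallP/familyP => H i; apply: H.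
rewrite card_family foldr_prod (bigID (mem A)) /= [X in (_ * X)%N]big1 ?muln1.
  rewrite -prod_nat_const; apply: eq_bigr => i iA.
  transitivity (p i != q i).+1; last by rewrite hd iA. rewrite -card2; by apply: eq_card => t; rewrite !inE.
move=> i iA; have := hd i; rewrite (negbTE iA) => /negbFE/eqP e.
by rewrite -(card1 (p i)); apply: eq_card => t; rewrite !inE -e orbb.
Qed.

Lemma cs_nat (I : finType) (C : {set I}) (f : I -> nat) :
  ((\sum_(c in C) f c) ^ 2 <= #|C| * \sum_(c in C) f c ^ 2)%N.
Proof.
rewrite -(leq_pmul2l (isT : 0 < 2)%N).
have -> : ((\sum_(c in C) f c) ^ 2 = \sum_(c in C) \sum_(c' in C) f c * f c')%N.
  by rewrite expnS expn1 big_distrl /=; apply: eq_bigr => c _; rewrite big_distrr.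
have -> : (2 * (#|C| * \sum_(c in C) f c ^ 2) = \sum_(c in C) \sum_(c' in C) (f c ^ 2 + f c' ^ 2))%N.
  symmetry; under eq_bigr => c _ do rewrite big_split /= sum_nat_const.
  rewrite big_split /= sum_nat_const -big_distrr /=; lia.
rewrite big_distrr /=; apply: leq_sum => c _; rewrite big_distrr /=; apply: leq_sum => c' _.
set a := f c; set b := f c'. rewrite !expnS !expn0 !muln1. have h: (2 * (a * b) + 0 <= a * a + b * b)%N; last by rewrite addn0 in h. case: (leqP a b) => h. rewrite -(subnK h); nia. rewrite -(subnK (ltnW h)); nia.
Qed.

Lemma kst (R : realFieldType) d (T : 'I_d -> finType) (k : nat) :
  forall (A : {set 'I_d}) (B : {set prodX T}) (y : prodX T) (n : nat) (v : R),
  #|A| = k -> B \subset fiber A y ->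
  (forall p q : prodX T, (forall i, (p i != q i) = (i \in A)) -> ~~ (cube p q \subset B)) ->
  (forall i, i \in A -> n <= #|T i|)%N ->
  0 <= v -> v <= 1 -> 1 <= n%:R * v ^+ (2 ^ k) ->
  #|B|%:R <= k%:R * (\prod_(i in A) #|T i|)%:R * v.
Proof.
elim: k => [|k IH] A B y n v hk hB hcf hT v0 v1 hv.
  move/eqP: hk; rewrite cards_eq0 => /eqP hA.
  have -> : B = set0.
    apply/setP => x; rewrite inE; apply/negP => xB.
    have := hcf x x; rewrite hA => /(_ (fun i => ltac:(by rewrite eqxx inE))) /negP; apply.
    apply/subsetP => z; rewrite inE => /forallP hz.
    have -> : z = x by apply/ffunP => i; have := hz i; rewrite orbb => /eqP.
    exact: xB.
  by rewrite cards0 !mul0r.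
have [j jA] : exists j, j \in A by apply/set0Pn; rewrite -card_gt0 hk.
set A' := A :\ j.
have hk' : #|A'| = k by move: hk; rewrite (cardsD1 j A) jA add1n => -[].
set nj := #|T j|.
set P' := (\prod_(i in A') #|T i|)%N.
have hP : (\prod_(i in A) #|T i| = nj * P')%N.
  rewrite (bigD1 j) //=; congr (_ * _)%N; apply: eq_bigl => i; rewrite !inE andbC.
  by [].
have hBcard : (#|B| <= nj * P')%N.
  by rewrite -hP -(card_fiber A y); apply: subset_leq_card.
pose pi x := upd x (y j).
have hpi : (#|pi @: B| <= P')%N.
  rewrite /P' -(card_fiber A' y); apply: subset_leq_card; apply/subsetP => _ /imsetP [x xB ->].
  rewrite inE; apply/forall_inP => i iA'.
  case: (eqVneq i j) => [->|ne]; first by rewrite upd_eq.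
  rewrite upd_neq //.
  have := subsetP hB x xB; rewrite inE => /forall_inP; apply.
  by move: iA'; rewrite !inE ne.
pose dd x := #|[set x' in B | pi x' == pi x]|.
pose Q := (\sum_(x in B) dd x)%N.
have hCS : (#|B| ^ 2 <= P' * Q)%N.
  have e1 : #|B| = (\sum_(c in pi @: B) #|[set x' in B | pi x' == c]|)%N.
    rewrite -sum1_card (partition_big pi (mem (pi @: B))) /=; last first.
      by move=> x xB; apply: imset_f.
    by apply: eq_bigr => c _; rewrite -sum1_card; apply: eq_bigl => x; rewrite inE.
  have e2 : Q = (\sum_(c in pi @: B) #|[set x' in B | pi x' == c]| ^ 2)%N.
    rewrite /Q (partition_big pi (mem (pi @: B))) /=; last first.
      by move=> x xB; apply: imset_f.
    apply: eq_bigr => c _.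
    rewrite (eq_bigr (fun _ => #|[set x' in B | pi x' == c]|)); last first.
      by move=> x /andP [_ /eqP <-].
    rewrite (eq_bigl (fun x => x \in [set x' in B | pi x' == c])); last by move=> x; rewrite inE.
    by rewrite sum_nat_const expnS expn1.
  rewrite e1 e2; apply: leq_trans (cs_nat _ _) _.
  by rewrite leq_mul2r hpi orbT.
have upd_inj x : injective (@upd d T x j).
  by move=> a b /(congr1 (fun z : prodX T => z j)); rewrite !upd_eq.
have hQ1 : Q = (\sum_(x in B) \sum_(a : T j) (upd x a \in B : nat))%N.
  apply: eq_bigr => x xB.
  rewrite (eq_bigr (fun a => if upd x a \in B then 1 else 0)%N) // -big_mkcond sum1_card.
  rewrite /dd -(card_imset _ (upd_inj x)); apply: eq_card => x'; rewrite inE.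
  apply/andP/imsetP => [[x'B /eqP e]|[a aB ->]].
    exists (x' j); last first.
      apply/ffunP => i; case: (eqVneq i j) => [->|ne]; first by rewrite upd_eq.
      rewrite upd_neq //; have := congr1 (fun z : prodX T => z i) e; rewrite /= /pi !upd_neq //.
    rewrite unfold_in /=. have -> : upd x (x' j) = x'.
      apply/ffunP => i; case: (eqVneq i j) => [->|ne]; first by rewrite upd_eq.
      rewrite upd_neq //; have := congr1 (fun z : prodX T => z i) e; rewrite /= /pi !upd_neq //.
    by [].
  by split; [rewrite unfold_in in aB | rewrite /pi upd_upd].
pose C (a a' : T j) : {set prodX T} := [set x in B | (x j == a) && (upd x a' \in B)].
have hQ2 : Q = (\sum_(a' : T j) \sum_(a : T j) #|C a a'|)%N.
  rewrite hQ1 exchange_big /=; apply: eq_bigr => a' _.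
  rewrite (partition_big (fun x : prodX T => x j) predT) //=; apply: eq_bigr => a _.
  rewrite -sum1_card big_mkcond [RHS]big_mkcond; apply: eq_bigr => x _; rewrite !inE.
  by case: (x \in B); case: (x j == a); case: (upd x a' \in B).
have hdiag : (\sum_(a : T j) #|C a a| = #|B|)%N.
  rewrite -sum1_card (partition_big (fun x : prodX T => x j) predT) //=; apply: eq_bigr => a _.
  rewrite -sum1_card; apply: eq_bigl => x; rewrite !inE.
  case: (eqVneq (x j) a) => [<-|]; last by rewrite andbF.
  by rewrite upd_id andbT andbb.
have hoff a a' : a != a' -> #|C a a'|%:R <= k%:R * P'%:R * v ^+ 2.
  move=> ne; apply: (IH A' _ (upd y a) n (v ^+ 2)) => //.
  - apply/subsetP => x; rewrite !inE => /andP [xB /andP [/eqP xa _]].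
    apply/forall_inP => i iA'.
    case: (eqVneq i j) => [->|ne']; first by rewrite upd_eq xa.
    rewrite upd_neq //.
    have := subsetP hB x xB; rewrite inE => /forall_inP; apply.
    by move: iA'; rewrite !inE ne'.
  - move=> p q hpq; apply/negP => /subsetP hsub.
    have pC : p \in C a a' by apply: hsub; rewrite inE; apply/forallP => i; rewrite eqxx.
    have qC : q \in C a a' by apply: hsub; rewrite inE; apply/forallP => i; rewrite eqxx orbT.
    move: pC qC; rewrite !inE => /andP[pB /andP[/eqP pa _]] /andP[qB /andP[/eqP qa _]].
    apply: (negP (hcf p (upd q a') _)).
      move=> i; case: (eqVneq i j) => [->|ne']; first by rewrite upd_eq pa jA.
      by rewrite upd_neq // hpq !inE ne'.
    apply/subsetP => x; rewrite inE => /forallP hx.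
    case: (eqVneq (x j) a) => [xja | xjna].
      have : x \in C a a'.
        apply: hsub; rewrite inE; apply/forallP => i.
        case: (eqVneq i j) => [->|ne']; first by rewrite xja pa eqxx.
        by have := hx i; rewrite upd_neq.
      by rewrite inE => /andP[].
    have xja' : x j = a'.
      by have := hx j; rewrite pa upd_eq (negbTE xjna) /= => /eqP.
    have : upd x a \in C a a'.
      apply: hsub; rewrite inE; apply/forallP => i.
      case: (eqVneq i j) => [->|ne']; first by rewrite upd_eq pa eqxx.
      by rewrite upd_neq //; have := hx i; rewrite upd_neq.
    by rewrite inE => /andP [_ /andP [_]]; rewrite upd_upd -xja' upd_id.
  - by move=> i; rewrite inE => /andP [_ iA]; exact: hT.
  - exact: exprn_ge0.
  - exact: exprn_ile1.
  - by rewrite -exprM -expnS.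
set M := k%:R * P'%:R * v ^+ 2.
have M0 : 0 <= M by rewrite /M mulr_ge0 ?exprn_ge0 // mulr_ge0.
have hQr : (Q%:R : R) <= #|B|%:R + (nj * nj)%:R * M.
  rewrite hQ2 natr_sum.
  apply: le_trans (_ : \sum_(a' : T j) \sum_(a : T j) ((if a == a' then #|C a a|%:R else 0) + M) <= _).
    apply: ler_sum => a' _; rewrite natr_sum; apply: ler_sum => a _.
    case: eqVneq => [->|ne]; first by rewrite lerDl.
    by rewrite add0r; exact: hoff.
  under eq_bigr => a' _ do rewrite big_split /= -big_mkcond big_pred1_eq.
  rewrite big_split /= -natr_sum hdiag lerD2l.
  rewrite !sumr_const (_ : #|(xpredT : pred (T j))| = nj); last by apply: eq_card.
  by rewrite -mulrnA mulr_natl.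
have h4 : 1 <= nj%:R * v ^+ 2.
  apply: le_trans hv _; apply: ler_pM.
  - exact: ler0n.
  - exact: exprn_ge0.
  - by rewrite ler_nat hT.
  - apply: ler_wiXn2l => //; rewrite expnS; by apply: leq_pmulr; rewrite expn_gt0.
have h1 : (#|B|%:R : R) ^+ 2 <= P'%:R * Q%:R.
  by rewrite -natrX -natrM ler_nat.
have h3 : (#|B|%:R : R) <= nj%:R * P'%:R by rewrite -natrM ler_nat.
rewrite hP natrM.
move: h1 h3 h4 hQr; rewrite /M.
set b := (#|B|%:R : R); set Pr := (P'%:R : R); set Qr := (Q%:R : R); set nr := (nj%:R : R).
rewrite natrM -/nr.
have b0 : 0 <= b by exact: ler0n.
have P0 : 0 <= Pr by exact: ler0n.
have n0 : 0 <= nr by exact: ler0n.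
have k0 : 0 <= (k%:R : R) by exact: ler0n.
move=> h1 h3 h4 hQr.
have e1 : Pr * b <= nr * nr * Pr * Pr * v ^+ 2.
  have : Pr * b <= Pr * (nr * Pr) by apply: ler_wpM2l.
  nra.
have e2 : b ^+ 2 <= (k.+1%:R * (nr * Pr) * v) ^+ 2.
  rewrite -natr1; nra.
rewrite -natr1 in e2 *.
have e3 : 0 <= (k%:R + 1) * (nr * Pr) * v by rewrite !mulr_ge0 // addr_ge0.
by rewrite -(ler_pXn2r (isT : (0 < 2)%N)) // ?nnegrE.
Qed.

Lemma cosh_le (R : realType) (e : R) : 0 <= e -> e <= 1/2 ->
  expR e + expR (- e) <= 2 * expR (e ^+ 2).
Proof.
move=> e0 e1.
set a := e / 2.
set x := expR a; set y := expR (- a).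
have xy : x * y = 1 by rewrite /x /y expRxMexpNx_1.
have hx : 1 + a <= x by exact: expR_ge1Dx.
have hy : 1 - a <= y by exact: expR_ge1Dx.
have ex : expR e = x ^+ 2 by rewrite /x -expRM_natl; congr expR; rewrite /a; field.
have ey : expR (- e) = y ^+ 2 by rewrite /y -expRM_natl; congr expR; rewrite /a; field.
have a0 : 0 <= a by rewrite /a; lra.
have a1 : a <= 1/4 by rewrite /a; lra.
have x0 : 0 <= x by exact: expR_ge0.
have y0 : 0 <= y by exact: expR_ge0.
have h1 : x * (1 - a) <= 1 by rewrite -[X in _ <= X]xy; apply: ler_wpM2l.
have h2 : y * (1 + a) <= 1 by rewrite -[X in _ <= X]xy mulrC; apply: ler_wpM2r.
have h3 : 1 + e ^+ 2 <= expR (e ^+ 2) by exact: expR_ge1Dx.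
have ee : e = 2 * a by rewrite /a; field.
rewrite ex ey; apply: le_trans (_ : 2 * (1 + e ^+ 2) <= _); last by lra.
rewrite ee.
have hx2 : (x * (1 - a)) ^+ 2 <= 1.
  rewrite -[X in _ <= X](expr1n _ 2); apply: lerXn2r; rewrite ?nnegrE //; nra.
have hy2 : (y * (1 + a)) ^+ 2 <= 1.
  rewrite -[X in _ <= X](expr1n _ 2); apply: lerXn2r; rewrite ?nnegrE //; nra.
have hp : 0 < (1 - a ^+ 2) ^+ 2 by apply: exprn_gt0; nra.
have key : (x ^+ 2 + y ^+ 2) * (1 - a ^+ 2) ^+ 2 <= 2 * (1 + (2 * a) ^+ 2) * (1 - a ^+ 2) ^+ 2.
  apply: le_trans (_ : (1 + a) ^+ 2 + (1 - a) ^+ 2 <= _).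
    have -> : (x ^+ 2 + y ^+ 2) * (1 - a ^+ 2) ^+ 2 = (x * (1 - a)) ^+ 2 * (1 + a) ^+ 2 + (y * (1 + a)) ^+ 2 * (1 - a) ^+ 2 by ring.
    apply: lerD; rewrite -[X in _ <= X]mul1r; apply: ler_wpM2r => //; exact: sqr_ge0.
  have a2 : a ^+ 2 <= 1/16 by nra.
  nra.
by rewrite -(ler_pM2r hp).
Qed.

Definition wt (R : realType) (X : finType) (Z : {set X}) (mu : R) (F : {ffun X -> 'F_2}) : R :=
  \prod_x (if x \in Z then (if F x == 1 then expR mu else 1) else (if F x == 0 then 1 else 0)).

Lemma wt_ge0 (R : realType) (X : finType) (Z : {set X}) (mu : R) F : 0 <= wt Z mu F.
Proof.
apply: prodr_ge0 => x _; case: ifP => _; case: ifP => _ //; exact: expR_ge0.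
Qed.

Lemma card_F2 : #|'F_2| = 2%N.
Proof. by rewrite card_Fp. Qed.

Lemma sum_wt (R : realType) (X : finType) (Z : {set X}) (mu : R) :
  \sum_F wt Z mu F = (1 + expR mu) ^+ #|Z|.
Proof.
rewrite /wt -(bigA_distr_bigA (fun x b => if x \in Z then (if b == 1 then expR mu else 1) else (if b == 0 then 1 else 0))) /=.
rewrite (eq_bigr (fun x => if x \in Z then 1 + expR mu else 1)); last first.
  move=> x _; case: ifP => _.
    rewrite (bigD1 (1 : 'F_2)) //= addrC; congr (_ + _).
    rewrite (eq_bigr (fun _ => 1)); last by move=> b /negbTE ->.
    rewrite sumr_const (_ : #|[pred b : 'F_2 | b != 1]| = 1%N) //.
    by rewrite cardC1 card_F2.
  by rewrite -big_mkcond big_pred1_eq.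
by rewrite -big_mkcond /= prodr_const.
Qed.

Lemma wt_V0 (R : realType) (X : finType) (Z : {set X}) (mu : R) (F : {ffun X -> 'F_2}) :
  (forall x, x \notin Z -> F x = 0) ->
  wt Z mu F = expR (#|[set z in Z | F z == 1]|%:R * mu).
Proof.
move=> hF; rewrite expRM_natl -prodr_const /wt [RHS]big_mkcond /=; apply: eq_bigr => x _.
rewrite inE; case: (boolP (x \in Z)) => xZ //=.
by rewrite hF // eqxx.
Qed.

Lemma tail1 (R : realType) (X : finType) (Z : {set X}) (mu c : R) :
  #|[set F : {ffun X -> 'F_2} | [forall x, (x \notin Z) ==> (F x == 0)] &&
       (c <= #|[set z in Z | F z == 1]|%:R * mu)]|%:R <= expR (- c) * (1 + expR mu) ^+ #|Z|.
Proof.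
rewrite -sum_wt mulr_sumr -sumr_const big_mkcond /=; apply: ler_sum => F _.
rewrite inE; case: ifP => [/andP [/forallP hF hc]|_]; last first.
  by rewrite mulr_ge0 ?expR_ge0 ?wt_ge0.
rewrite wt_V0; last by move=> x xZ; apply/eqP; have := hF x; rewrite xZ.
by rewrite -expRD -[X in X <= _]expR0 ler_expR; lra.
Qed.


Lemma core1 (R : realType) (eps s : R) : 0 <= eps -> eps <= 1/2 -> (s = 1 \/ s = -1) ->
  expR (- (s * eps + 2 * eps ^+ 2)) * (1 + expR (s * (2 * eps))) <= 2 * expR (- eps ^+ 2).
Proof.
move=> e0 e1 hs.
have -> : expR (- (s * eps + 2 * eps ^+ 2)) * (1 + expR (s * (2 * eps))) =
   expR (- (2 * eps ^+ 2)) * (expR eps + expR (- eps)).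
  rewrite mulrDr mulr1 -expRD mulrDr -!expRD; case: hs => ->.
    by rewrite addrC; congr (expR _ + expR _); ring.
  by congr (expR _ + expR _); ring.
apply: le_trans (_ : expR (- (2 * eps ^+ 2)) * (2 * expR (eps ^+ 2)) <= _).
  by apply: ler_wpM2l; [exact: expR_ge0 | exact: cosh_le].
by rewrite mulrCA -expRD; apply: ler_wpM2l => //; rewrite ler_expR; lra.
Qed.

Lemma tail_pow (R : realType) (eps s : R) (N : nat) : 0 <= eps -> eps <= 1/2 -> (s = 1 \/ s = -1) ->
  expR (- (N%:R * (s * eps + 2 * eps ^+ 2))) * (1 + expR (s * (2 * eps))) ^+ N
   <= 2 ^+ N * expR (- (eps ^+ 2 * N%:R)).
Proof.
move=> e0 e1 hs.
rewrite -mulrN expRM_natl -exprMn mulrC -mulNr expRM_natr -exprMn.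
apply: lerXn2r; rewrite ?nnegrE ?mulr_ge0 ?expR_ge0 ?addr_ge0 //; first exact: expR_ge0.
by rewrite mulrC core1.
Qed.

Lemma tail_unb (R : realType) (X : finType) (Z : {set X}) (eps : R) : 0 < eps ->
  #|[set F : {ffun X -> 'F_2} | [forall x, (x \notin Z) ==> (F x == 0)] &&
     (let k := (#|[set z in Z | F z == 1]|)%:R : R in
       ((1/2 + eps) * #|Z|%:R < k) || (k < (1/2 - eps) * #|Z|%:R))]|%:R
  <= 2 * (2 ^+ #|Z| * expR (- (eps ^+ 2 * #|Z|%:R))).
Proof.
move=> e0.
set N := #|Z|.
have hk (F : {ffun X -> 'F_2}) : (#|[set z in Z | F z == 1%R]| <= N)%N.
  by apply: subset_leq_card; apply/subsetP => z; rewrite inE => /andP[].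
have RHS0 : 0 <= 2 * (2 ^+ N * expR (- (eps ^+ 2 * N%:R))).
  by rewrite !mulr_ge0 ?exprn_ge0 ?expR_ge0.
case: (leP eps (1/2)) => he; last first.
  rewrite (_ : [set F | _] = set0) ?cards0 //.
  apply/setP => F; rewrite !inE /=; apply/negbTE; rewrite negb_and; apply/orP; right.
  have := hk F; rewrite -(ler_nat R) => hkF.
  have N0 : (0 : R) <= N%:R by exact: ler0n.
  have k0 : (0 : R) <= #|[set z in Z | F z == 1]|%:R by exact: ler0n.
  rewrite negb_or -!leNgt; apply/andP; split; nra.
pose S1 := [set F : {ffun X -> 'F_2} | [forall x, (x \notin Z) ==> (F x == 0)] &&
       (N%:R * (1 * eps + 2 * eps ^+ 2) <= #|[set z in Z | F z == 1]|%:R * (1 * (2 * eps)))].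
pose S2 := [set F : {ffun X -> 'F_2} | [forall x, (x \notin Z) ==> (F x == 0)] &&
       (N%:R * ((-1) * eps + 2 * eps ^+ 2) <= #|[set z in Z | F z == 1]|%:R * ((-1) * (2 * eps)))].
apply: le_trans (_ : (#|S1| + #|S2|)%:R <= _).
  rewrite ler_nat; apply: leq_trans (leq_card_setU S1 S2); apply: subset_leq_card.
  apply/subsetP => F; rewrite !inE /= => /andP [hF hu]; rewrite hF /=.
  case/orP: hu => hu; [apply/orP; left | apply/orP; right]; nra.
rewrite natrD mulr2n mulrDl mul1r; apply: lerD.
  apply: le_trans (tail1 _ _ _) _; apply: tail_pow; [exact: ltW | exact: he | by left].
apply: le_trans (tail1 _ _ _) _; apply: tail_pow; [exact: ltW | exact: he | by right].
Qed.

Definition mkw d (T : 'I_d -> finType) (S : {set 'I_d}) (p q : prodX T) (i : 'I_d) : Wf T S i :=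
  match i \in S as b return (if b then (T i * T i)%type : finType else T i) with
  | true => (p i, q i) | false => p i end.

Definition mkxb d (T : 'I_d -> finType) (S : {set 'I_d}) (p q : prodX T) : Xbar T S :=
  [ffun i => mkw S p q i].

Lemma xhat_mkxb d (T : 'I_d -> finType) (S : {set 'I_d}) (p q : prodX T) :
  (forall i, i \notin S -> p i = q i) -> xhat (mkxb S p q) = cube p q.
Proof.
move=> hpq; apply/setP => y; rewrite !inE; apply: eq_forallb => i.
rewrite ffunE /coord_ok /mkw.
have := hpq i.
case: (i \in S) => //= -> //.
by rewrite orbb.
Qed.

Lemma card_supp (X : finType) (D : {set X}) :
  #|[set F : {ffun X -> 'F_2} | [forall x, (x \notin D) ==> (F x == 0)]]| = (2 ^ #|D|)%N.
Proof.
transitivity (#|'F_2| ^ #|D|)%N; last by rewrite card_F2.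
rewrite -(card_pffun_on 0 D predT); apply: eq_card => F; rewrite inE.
apply/forallP/pffun_onP => [H|[H _] x].
  split; last by move=> z _.
  apply/subsetP => x; rewrite inE; apply: contraR => xD; have := H x; rewrite xD.
  by [].
apply/implyP => xD; apply: contraR xD => Fx; apply: (subsetP H); rewrite inE.
by [].
Qed.

Lemma dF_sub d (T : 'I_d -> finType) (S : {set 'I_d}) (Z : {set prodX T}) (F G : {ffun prodX T -> 'F_2}) :
  dF S Z (F - G) = dF S Z F - dF S Z G.
Proof.
apply/ffunP => xb; rewrite !ffunE; case: ifP => _; last by rewrite subr0.
by rewrite -sumrB; apply: eq_bigr => x _; rewrite !ffunE.
Qed.

Lemma dF_rZ d (T : 'I_d -> finType) (S : {set 'I_d}) (Z : {set prodX T}) (F : {ffun prodX T -> 'F_2}) :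
  dF S Z [ffun x => if x \in Z then F x else 0] = dF S Z F.
Proof.
apply/ffunP => xb; rewrite !ffunE; case: ifP => // /andP [/subsetP hs _].
by apply: eq_bigr => x /hs xZ; rewrite ffunE xZ.
Qed.

Definition Bset d (T : 'I_d -> finType) (S : {set 'I_d}) (Z : {set prodX T}) : {set prodX T} :=
  [set z in Z | ~~ [exists xb : Xbar T S, [&& xhat xb \subset Z, #|xhat xb| == (2 ^ #|S|)%N,
      z \in xhat xb & [forall x in xhat xb, (enum_rank x <= enum_rank z)%N]]]].

Lemma kernel0 d (T : 'I_d -> finType) (S : {set 'I_d}) (Z : {set prodX T}) (H : {ffun prodX T -> 'F_2}) :
  (forall x, x \notin Z -> H x = 0) -> dF S Z H = 0 -> (forall x, x \in Bset S Z -> H x = 0) -> H = 0.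
Proof.
move=> hZ hd hB.
suff hm : forall m z, (enum_rank z < m)%N -> H z = 0.
  by apply/ffunP => z; rewrite ffunE (hm (enum_rank z).+1).
elim=> [//|m IH] z hz.
case: (boolP (z \in Z)) => zZ; last exact: hZ.
case: (boolP (z \in Bset S Z)) => zB; first exact: hB.
move: zB; rewrite inE zZ /= negbK => /existsP [xb /and4P [hsub /eqP hc zx /forall_inP hmax]].
have := congr1 (fun g : {ffun Xbar T S -> 'F_2} => g xb) hd.
rewrite !ffunE hsub hc eqxx /= (bigD1 z) //= big1 ?addr0 //.
move=> x /andP [xx ne]; apply: IH.
have := hmax x xx; rewrite leq_eqVlt => /orP [/eqP e|lt]; last by apply: leq_trans lt hz.
by move: ne; rewrite -(inj_eq enum_rank_inj) -val_eqE /= e eqxx.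
Qed.

Lemma B_cubefree d (T : 'I_d -> finType) (S : {set 'I_d}) (Z : {set prodX T}) (p q : prodX T) :
  (forall i, (p i != q i) = (i \in S)) -> ~~ (cube p q \subset Bset S Z).
Proof.
move=> hpq; apply/negP => hsub.
have hx : xhat (mkxb S p q) = cube p q.
  by apply: xhat_mkxb => i iS; apply/eqP; rewrite -[_ == _]negbK hpq (negbTE iS).
have pc : p \in cube p q by rewrite inE; apply/forallP => i; rewrite eqxx.
case: (@arg_maxnP _ p (mem (cube p q)) (fun x => nat_of_ord (enum_rank x)) pc) => z zc zmax.
have zc' : z \in cube p q := zc.
have := subsetP hsub z zc'; rewrite inE => /andP [zZ /negP]; apply.
apply/existsP; exists (mkxb S p q); rewrite hx zc' (card_cube hpq) eqxx /=.
apply/andP; split.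
  by apply/subsetP => x /(subsetP hsub); rewrite inE => /andP [].
by apply/forall_inP => x xc; apply: zmax.
Qed.

Unset Implicit Arguments.

Theorem proposition4p3 (R : realType) (d : nat) (T : 'I_d -> finType)
  (S : {set 'I_d}) (Z : {set prodX T}) (delta : R) (n : nat) :
  (forall i, 0 < #|T i|)%N ->
  (2 <= #|S|)%N ->
  (* pi_{[d]-S}(Z) is a single point *)
  (exists y : prodX T, [set z : prodX T | [forall (i | i \notin S), z i == y i]] :&: Z
     = Z /\ Z != set0) ->
  0 < delta ->
  delta * (\prod_(i in S) #|T i|)%:R <= #|Z|%:R ->
  (0 < n)%N ->
  (forall i, i \in S -> n <= #|T i|)%N ->
  forall eps : R, 0 < eps ->
  (#|GSeps S eps Z|)%:R / (#|GS S Z|)%:R <=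
  expR ((\prod_(i in S) #|T i|)%:R *
        (- delta * eps ^+ 2 + 2 ^+ (#|S| + 2) * powR n%:R (- (2 ^+ #|S|)^-1))).
Proof.
move=> hT0 hS [y [hyZ hZ0]] hdel hdens hn hnT eps heps.
pose V0 := [set F : {ffun prodX T -> 'F_2} | [forall x, (x \notin Z) ==> (F x == 0)]].
pose Unb0 := [set F : {ffun prodX T -> 'F_2} | [forall x, (x \notin Z) ==> (F x == 0)] &&
     (let k := (#|[set z in Z | F z == 1]|)%:R : R in
       ((1/2 + eps) * #|Z|%:R < k) || (k < (1/2 - eps) * #|Z|%:R))].
pose B := Bset S Z.
pose K0 := [set F in V0 | dF S Z F == 0].
have inV0 (F : {ffun prodX T -> 'F_2}) : reflect (forall x, x \notin Z -> F x = 0) (F \in V0).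
  rewrite inE; apply: (iffP forallP) => H x; first by move=> xZ; apply/eqP; have := H x; rewrite xZ.
  by apply/implyP => /H ->.
have cardV0 : #|V0| = (2 ^ #|Z|)%N by apply: card_supp.
have cardK0 : (#|K0| <= 2 ^ #|B|)%N.
  pose r (F : {ffun prodX T -> 'F_2}) : {ffun prodX T -> 'F_2} := [ffun x => if x \in B then F x else 0].
  rewrite -(card_supp B) -(card_in_imset (f := r)).
    apply: subset_leq_card; apply/subsetP => _ /imsetP [F _ ->]; rewrite inE.
    by apply/forallP => x; apply/implyP => xB; rewrite ffunE (negbTE xB).
  move=> F G /setIdP [/inV0 hF /eqP dF0] /setIdP [/inV0 hG /eqP dG0] e.
  apply/eqP; rewrite -subr_eq0; apply/eqP; apply: (@kernel0 _ _ S Z).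
  - by move=> x xZ; rewrite !ffunE hF ?hG ?subr0.
  - by rewrite dF_sub dF0 dG0 subr0.
  - move=> x xB; have := congr1 (fun f : {ffun prodX T -> 'F_2} => f x) e.
    by rewrite /r !ffunE xB => ->; rewrite subrr.
have fib : (#|V0| <= #|GS S Z| * #|K0|)%N.
  rewrite -sum1_card (partition_big (dF S Z) (mem (dF S Z @: V0))) /=; last first.
    by move=> F FV; apply: imset_f.
  apply: leq_trans (_ : \sum_(g in dF S Z @: V0) #|K0| <= _)%N.
    apply: leq_sum => _ /imsetP [F0 F0V ->].
    rewrite sum1dep_card.
    rewrite -(card_imset _ (addIr (- F0))).
    apply: subset_leq_card; apply/subsetP => G /imsetP [F]; rewrite inE => /andP [FV /eqP e] ->.
    apply/setIdP; split.
      apply/inV0 => x xZ; move/inV0: FV => FV; move/inV0: F0V => F0V.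
      by rewrite !ffunE FV ?F0V ?subr0.
    by rewrite dF_sub e subrr.
  rewrite sum_nat_const leq_mul2r; apply/orP; right.
  apply: subset_leq_card; apply/subsetP => _ /imsetP [F _ ->]; apply/imsetP; exists F => //.
have hGSeps : (#|GSeps S eps Z| <= #|Unb0|)%N.
  apply: leq_trans (leq_imset_card (dF S Z) Unb0); apply: subset_leq_card.
  apply/subsetP => _ /imsetP [F hF ->]; apply/imsetP.
  exists [ffun x => if x \in Z then F x else 0]; last by rewrite dF_rZ.
  rewrite inE /=.
  have -> : [set z in Z | [ffun x => if x \in Z then F x else 0] z == 1] = [set z in Z | F z == 1].
    by apply/setP => z; rewrite !inE ffunE; case: (z \in Z).
  rewrite inE /= in hF; rewrite hF andbT; apply/forallP => x; apply/implyP => xZ.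
  by rewrite ffunE (negbTE xZ).
have htail := tail_unb Z heps.
set s := #|S|.
set P := (\prod_(i in S) #|T i|)%N.
set v := n%:R `^ (- (2 ^+ s)^-1) : R.
have nR : (1 : R) <= n%:R by rewrite ler1n.
have n0 : (n%:R : R) != 0 by rewrite pnatr_eq0 -lt0n.
have v0 : 0 <= v by exact: powR_ge0.
have v1 : v <= 1.
  rewrite /v -[X in _ <= X](powRr0 n%:R); apply: ler_powR => //.
  by rewrite oppr_le0 invr_ge0 exprn_ge0.
have vpow : v ^+ (2 ^ s) = n%:R^-1.
  rewrite /v -powR_mulrn ?powR_ge0 // -powRrM natrX mulNr mulVf ?powR_inv1 //.
  by rewrite expf_neq0 // pnatr_eq0.
have hv : 1 <= n%:R * v ^+ (2 ^ s) by rewrite vpow mulfV.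
have hBsub : B \subset fiber S y.
  apply/subsetP => z; rewrite inE => /andP [zZ _]; move: zZ.
  by rewrite -hyZ !inE => /andP [h _].
have hBb := @kst R d T s S B y n v erefl hBsub (@B_cubefree d T S Z) hnT v0 v1 hv.
have Pn : (n <= P)%N.
  have [i0 i0S] : exists i0, i0 \in S by apply/set0Pn; rewrite -card_gt0; apply: leq_trans hS.
  rewrite /P (bigD1 i0) //=; apply: leq_trans (hnT i0 i0S) _; apply: leq_pmulr.
  by rewrite prodn_gt0.
have vn : n%:R^-1 <= v.
  rewrite -vpow -[X in _ <= X]expr1; apply: ler_wiXn2l => //; by rewrite expn_gt0.
have Pv : 1 <= P%:R * v.
  apply: le_trans (_ : n%:R * n%:R^-1 <= _); first by rewrite mulfV.
  by apply: ler_pM; [exact: ler0n | rewrite invr_ge0 ler0n | rewrite ler_nat | exact: vn].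
have s2 : (s.+1%:R : R) <= 2 ^+ (s + 2).
  rewrite -natrX ler_nat; apply: leq_trans (ltnW (ltn_expl _ (isT : (1 < 2)%N))).
  by rewrite addn2 ltnW.
have hb1 : (#|B|.+1)%:R <= 2 ^+ (s + 2) * P%:R * v.
  have h : (s.+1%:R : R) * (P%:R * v) <= 2 ^+ (s + 2) * (P%:R * v).
    by apply: ler_wpM2r => //; rewrite mulr_ge0 ?ler0n.
  move: h hBb; rewrite -!natr1 -!mulrA mulrDl mul1r => h hBb'.
  by apply: le_trans h; apply: lerD.
have pow2 (m : nat) : (2 : R) ^+ m <= expR m%:R.
  rewrite -[m%:R]mulr1 expRM_natl; apply: lerXn2r; rewrite ?nnegrE ?expR_ge0 //.
  by have := expR_ge1Dx (1 : R); rewrite (_ : 1 + 1 = 2 :> R) //.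
have hN : (2 ^ #|Z| <= #|GS S Z| * 2 ^ #|B|)%N.
  by rewrite -cardV0; apply: leq_trans fib _; rewrite leq_mul2l cardK0 orbT.
have g0 : (0 < #|GS S Z|)%N.
  by move: hN; case: #|GS S Z| => //; rewrite mul0n leqn0 expn_eq0.
have g0R : (0 : R) < #|GS S Z|%:R by rewrite ltr0n.
rewrite ler_pdivrMr //.
apply: le_trans (_ : #|Unb0|%:R <= _); first by rewrite ler_nat.
apply: le_trans htail _.
set e := expR (- (eps ^+ 2 * #|Z|%:R)).
have e0 : 0 <= e by exact: expR_ge0.
apply: le_trans (_ : 2 * (#|GS S Z|%:R * 2 ^+ #|B| * e) <= _).
  apply: ler_wpM2l => //; apply: ler_wpM2r => //.
  by move: hN; rewrite -(ler_nat R) natrM !natrX.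
have eq3 (a b c : R) : 2 * (a * b * c) = a * (2 * b * c) by ring.
rewrite eq3 -exprS.
rewrite [X in _ <= X]mulrC; apply: ler_wpM2l; first exact: ler0n.
apply: le_trans (_ : expR (#|B|.+1)%:R * e <= _).
  by apply: ler_wpM2r => //; exact: pow2.
rewrite /e -expRD ler_expR.
have hd2 : delta * P%:R * eps ^+ 2 <= #|Z|%:R * eps ^+ 2.
  by apply: ler_wpM2r => //; exact: sqr_ge0.
rewrite -/v; move: hb1 hd2.
move: (#|B|.+1)%:R (#|Z|%:R) (P%:R) ((2 : R) ^+ (s + 2)) (eps ^+ 2) (v) (delta).
clear; move=> bb NZ Pr w e2 vv dl hb1 hd2.
nra.
Qed.
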